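(* Let $W:\mathrm{cont}^+(\mathbb{T},\xi_0)\to\mathbb{R}$ be a positive function that is positively 1-homogeneous and invariant under the adjoint action of $\mathrm{Cont}(\mathbb{T},\xi_0)=\mathrm{Diff}_0(\mathbb{T})$. Then there exists $c>0$ such that $W=cV$. In particular, $V$ is, up to rescaling, the unique bi-invariant Lorentz--Finsler metric on $(\mathrm{Cont}(\mathbb{T},\xi_0),\mathrm{cont}^+(\mathbb{T},\xi_0))$.
   Context: $\mathbb{T}=\mathbb{R}/\mathbb{Z}$ with trivial contact structure $\xi_0=\{0\}$ co-oriented by the standard orientation; $\mathrm{Diff}_0(\mathbb{T})$ is the group of orientation-preserving diffeomorphisms, acting on vector fields by push-forward $X\mapsto\phi_*X$ (the adjoint action). $\mathrm{cont}^+(\mathbb{T},\xi_0)$ is the set of vector fields $H\,\partial_x$ with $H>0$. $V(H\partial_x)=\left(\int_0^1\frac{\mathrm{d}x}{H(x)}\right)^{-1}$. A bi-invariant Lorentz--Finsler metric on the cone $\mathrm{cont}^+$ is a positive, positively 1-homogeneous, adjoint-invariant function on it that is smooth, strongly concave in non-radial directions, and extends continuously by $0$ to the boundary of the cone. *)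

(* Defs.v *)
From Stdlib Require Import Reals.
From Coquelicot Require Import Coquelicot.
Open Scope R_scope.

Definition smooth (f : R -> R) : Prop := forall (n : nat) (x : R), ex_derive_n f n x.

(* A vector field H d/dx on T = R/Z is identified with a smooth 1-periodic H. *)
Definition periodic1 (f : R -> R) : Prop := forall x, f (x + 1) = f x.

(* cont^+(T, xi_0): vector fields H d/dx with H > 0. *)
Definition cont_pos (H : R -> R) : Prop :=
  smooth H /\ periodic1 H /\ forall x, 0 < H x.

(* Diff_0(T): orientation-preserving diffeomorphisms of T, given by their
   lifts phi : R -> R, smooth, phi(x+1) = phi(x) + 1, phi' > 0. *)
Definition diff0_lift (phi : R -> R) : Prop :=
  smooth phi /\ (forall x, phi (x + 1) = phi x + 1) /\ (forall x, 0 < Derive phi x).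

Definition pushforward (phi H G : R -> R) : Prop :=
  forall x, G (phi x) = Derive phi x * H x.

Definition V (H : R -> R) : R := / RInt (fun x => / H x) 0 1.

(* Main.v *)
Require Import Defs.
From Stdlib Require Import Reals Lra.
From Coquelicot Require Import Coquelicot.
Open Scope R_scope.

Fixpoint Ck (n : nat) (f : R -> R) : Prop :=
  match n with
  | O => True
  | S m => (forall x, ex_derive f x) /\ Ck m (Derive f)
  end.

Lemma Ck_ext n : forall f g, (forall x, f x = g x) -> Ck n f -> Ck n g.
Proof.
induction n as [|n IH]; simpl; auto.
intros f g E [D C]; split.
- intros x; apply ex_derive_ext with f; auto.
- apply IH with (Derive f); auto. intros x; apply Derive_ext; auto.
Qed.

Lemma Ck_S n : forall f, Ck (S n) f -> Ck n f.
Proof.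
induction n as [|n IH]; simpl; auto.
intros f [D [D1 C]]; split; auto. apply IH. simpl; auto.
Qed.

Lemma Derive_n_Derive n : forall f x, Derive_n (Derive f) n x = Derive_n f (S n) x.
Proof.
induction n as [|n IH]; intros f x; simpl; auto.
apply Derive_ext; intros t; apply IH.
Qed.

Lemma Ck_smooth_1 n : forall f, Ck n f -> forall x, ex_derive_n f n x.
Proof.
induction n as [|n IH]; intros f C x; simpl; auto.
destruct C as [D C]. destruct n as [|m]; simpl; auto.
apply ex_derive_ext with (Derive_n (Derive f) m).
- intros t; apply Derive_n_Derive.
- apply (IH _ C x).
Qed.

Lemma smooth_Derive f : smooth f -> smooth (Derive f).
Proof.
intros Sm n x. destruct n as [|m]; simpl; auto.
apply ex_derive_ext with (Derive_n f (S m)).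
- intros t; symmetry; apply Derive_n_Derive.
- apply (Sm (S (S m)) x).
Qed.

Lemma smooth_Ck f : smooth f -> forall n, Ck n f.
Proof.
intros Sm n; revert f Sm; induction n as [|n IH]; intros f Sm; simpl; auto.
split.
- intros x; apply (Sm 1%nat x).
- apply IH; apply smooth_Derive; auto.
Qed.

Lemma Ck_smooth f : (forall n, Ck n f) -> smooth f.
Proof. intros C n x; apply Ck_smooth_1; auto. Qed.

Lemma Ck_const n : forall c, Ck n (fun _ => c).
Proof.
induction n as [|n IH]; intros c; simpl; auto. split.
- intros; apply ex_derive_const.
- apply Ck_ext with (fun _ => 0); auto. intros; rewrite Derive_const; auto.
Qed.

Lemma Ck_plus n : forall f g, Ck n f -> Ck n g -> Ck n (fun x => f x + g x).
Proof.
induction n as [|n IH]; intros f g; simpl; auto.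
intros [Df Cf] [Dg Cg]; split.
- intros x; exact (ex_derive_plus f g x (Df x) (Dg x)).
- apply Ck_ext with (fun x => Derive f x + Derive g x).
  + intros x; rewrite Derive_plus; auto.
  + apply IH; auto.
Qed.

Lemma Ck_mult n : forall f g, Ck n f -> Ck n g -> Ck n (fun x => f x * g x).
Proof.
induction n as [|n IH]; intros f g; simpl; auto.
intros Cf Cg. pose proof (Ck_S n f Cf) as Cf'. pose proof (Ck_S n g Cg) as Cg'.
destruct Cf as [Df Cf]; destruct Cg as [Dg Cg]; split.
- intros x; exact (ex_derive_mult f g x (Df x) (Dg x)).
- apply Ck_ext with (fun x => Derive f x * g x + f x * Derive g x).
  + intros x; rewrite Derive_mult; auto.
  + apply Ck_plus; apply IH; auto.
Qed.

Lemma Ck_inv n : forall f, Ck n f -> (forall x, f x <> 0) -> Ck n (fun x => / f x).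
Proof.
induction n as [|n IH]; intros f; simpl; auto.
intros Cf N. pose proof (Ck_S n f Cf) as Cf'.
destruct Cf as [Df Cf]; split.
- intros x; apply ex_derive_inv; auto.
- apply Ck_ext with (fun x => (-1) * Derive f x * (/ f x * / f x)).
  + intros x; rewrite Derive_inv; auto. specialize (N x). field. auto.
  + apply Ck_mult; [apply Ck_mult|apply Ck_mult]; auto. apply Ck_const.
Qed.

Lemma main_phi (H : R -> R) : cont_pos H ->
  let I := RInt (fun t => / H t) 0 1 in
  0 < I /\ diff0_lift (fun x => / I * RInt (fun t => / H t) 0 x) /\
  forall x, Derive (fun x => / I * RInt (fun t => / H t) 0 x) x = / I * / H x.
Proof.
intros [SH [PH PosH]] I.
set (g := fun t => / H t).
assert (Cg : forall n, Ck n g).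
{ intros n; apply Ck_inv. apply smooth_Ck; auto. intros x; specialize (PosH x); lra. }
assert (Dg : forall x, ex_derive g x) by (intros x; destruct (Cg 1%nat); auto).
assert (Cog : forall x, continuous g x) by (intros x; exact (ex_derive_continuous g x (Dg x))).
assert (Eg : forall a b, ex_RInt g a b) by (intros a b; apply (ex_RInt_continuous (V:=R_CompleteNormedModule)); intros; auto).
assert (Ipos : 0 < I).
{ unfold I; apply RInt_gt_0; [lra| |auto]. intros x _; apply Rinv_0_lt_compat; auto. }
set (F := fun x => RInt g 0 x).
assert (DF : forall x, is_derive F x (g x)).
{ intros x; apply is_derive_RInt with 0; auto.
  apply filter_forall; intros y; apply RInt_correct; auto. }
set (phi := fun x => / I * F x).
assert (Dphi : forall x, is_derive phi x (/ I * g x)).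
{ intros x; apply is_derive_scal; auto. }
assert (Dphi' : forall x, Derive phi x = / I * g x).
{ intros x; apply is_derive_unique; auto. }
split; [exact Ipos|].
change (diff0_lift phi /\ (forall x, Derive phi x = / I * / H x)).
split; [|exact Dphi'].
split; [|split].
- apply Ck_smooth; intros n; destruct n as [|n]; simpl; auto. split.
  + intros x; exists (/ I * g x); auto.
  + apply Ck_ext with (fun x => / I * g x).
    * intros x; rewrite Dphi'; auto.
    * apply Ck_mult; auto; apply Ck_const.
- set (D := fun x => phi (x + 1) - phi x - 1).
  assert (DD : forall x, is_derive D x 0).
  { intros x.
    assert (A1 : is_derive (fun y => phi (y + 1)) x (/ I * g x)).
    { assert (A : is_derive (fun y => y + 1) x 1).
      { pose proof (is_derive_plus (fun y : R => y) (fun _ => 1) x one zero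
          (is_derive_id x) (is_derive_const 1 x)) as P.
        simpl in P. unfold plus, one, zero in P; simpl in P.
        assert (E : 1 + 0 = 1) by ring. rewrite E in P. exact P. }
      pose proof (is_derive_comp phi (fun y => y + 1) x _ _ (Dphi (x + 1)) A) as P.
      unfold scal in P; simpl in P; unfold mult in P; simpl in P.
      replace (/ I * g x) with (1 * (/ I * g (x + 1))).
      exact P. unfold g; rewrite PH; ring. }
    pose proof (is_derive_minus _ _ x _ _ A1 (Dphi x)) as P1.
    pose proof (is_derive_minus _ _ x _ _ P1 (is_derive_const 1 x)) as P2.
    unfold minus, plus, opp, zero in P2; simpl in P2.
    replace 0 with (/ I * g x + - (/ I * g x) + - 0) by ring. exact P2. }
  assert (Dc : forall x, D x = D 0).
  { intros x.
    pose proof (is_RInt_derive D (fun _ => 0) 0 x (fun y _ => DD y)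
       (fun y _ => continuous_const 0 y)) as P.
    apply is_RInt_unique in P. rewrite RInt_const in P.
    unfold scal, minus, plus, opp in P; simpl in P; unfold mult in P; simpl in P.
    lra. }
  assert (D0 : D 0 = 0).
  { unfold D, phi, F. rewrite Rplus_0_l, RInt_point. unfold zero; simpl.
    fold g in I. change (RInt g 0 1) with I. field. lra. }
  intros x. specialize (Dc x). rewrite D0 in Dc. unfold D in Dc. lra.
- intros x; rewrite Dphi'. unfold g. apply Rmult_lt_0_compat;
  apply Rinv_0_lt_compat; auto.
Qed.

Theorem proposition3p1 (W : (R -> R) -> R) :
  (forall H, cont_pos H -> 0 < W H) ->
  (forall H (c : R), cont_pos H -> 0 < c -> W (fun x => c * H x) = c * W H) ->
  (forall phi H G, diff0_lift phi -> cont_pos H -> pushforward phi H G -> W G = W H) ->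
  exists c : R, 0 < c /\ forall H, cont_pos H -> W H = c * V H.
Proof.
intros Wpos Whom Winv.
assert (C1 : cont_pos (fun _ => 1)).
{ split; [|split].
  - apply Ck_smooth; intros; apply Ck_const.
  - intros x; auto.
  - intros; lra. }
exists (W (fun _ => 1)); split; [apply Wpos; auto|].
intros H CH.
destruct (main_phi H CH) as [Ipos [Dl Dv]].
set (I := RInt (fun t => / H t) 0 1) in *.
assert (E : W (fun x => / I * 1) = W H).
{ apply Winv with (fun x => / I * RInt (fun t => / H t) 0 x); auto.
  intros x. rewrite Dv. destruct CH as [_ [_ P]]. specialize (P x). field. lra. }
rewrite <- E, Whom; auto. unfold V. fold I. ring.
apply Rinv_0_lt_compat; auto.
Qed.
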